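(* p-Commutativity fails in general: there exist a language $L$, an $L$-algebra $\mathfrak A$ with universe $A$, and elements $a,b\in A$ such that $a:b\not\approx_{\mathfrak A}b:a$.
   Context: Let $L$ be a language of algebras: a set of function symbols, each with an arity in $\mathbb N$ (constants are 0-ary function symbols). Fix a countably infinite set $X$ of variables; $T_{L,X}$ is the set of $L$-terms over $X$, and $X(s)$ denotes the set of variables occurring in a term $s$. For an $L$-algebra $\mathfrak A$ with universe $A$, every term $s$ induces a function $s^{\mathfrak A}$, evaluated at assignments of elements of $A$ to variables. An arrow of $\mathfrak A$ is a pair $(a,b)\in A\times A$, written $a\to b$. The generalizations of an arrow $a\to b$ in $\mathfrak A$ are the pairs of arbitrary terms $s\to t$ with $s,t\in T_{L,X}$ such that there is an assignment $\sigma$ of elements of $A$ to the variables in $X(s)\cup X(t)$ with $s^{\mathfrak A}(\sigma)=a$ and $t^{\mathfrak A}(\sigma)=b$; their set is denoted $\uparrow_{\mathfrak A}(a\to b)$. For $L$-algebras $\mathfrak A,\mathfrak B$, an arrow $a\to b$ of $\mathfrak A$ and an arrow $c\to d$ of $\mathfrak B$, set $(a\to b)\uparrow_{(\mathfrak A,\mathfrak B)}(c\to d):=\uparrow_{\mathfrak A}(a\to b)\cap\uparrow_{\mathfrak B}(c\to d)$. A pair of terms $s\to t$ is trivial in $(\mathfrak A,\mathfrak B)$ if it belongs to $\uparrow_{\mathfrak A}(e)$ for every arrow $e$ of $\mathfrak A$ and to $\uparrow_{\mathfrak B}(e')$ for every arrow $e'$ of $\mathfrak B$. We write $a\to b\lesssim_{(\mathfrak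 A,\mathfrak B)}c\to d$ iff either (i) every element of $\uparrow_{\mathfrak A}(a\to b)\cup\uparrow_{\mathfrak B}(c\to d)$ is trivial in $(\mathfrak A,\mathfrak B)$, or (ii) $(a\to b)\uparrow_{(\mathfrak A,\mathfrak B)}(c\to d)$ contains an element not trivial in $(\mathfrak A,\mathfrak B)$ and, for every arrow $c'\to d'$ of $\mathfrak B$, the inclusion $(a\to b)\uparrow_{(\mathfrak A,\mathfrak B)}(c\to d)\subseteq(a\to b)\uparrow_{(\mathfrak A,\mathfrak B)}(c'\to d')$ implies equality of these two sets. Define $a\to b\approx_{(\mathfrak A,\mathfrak B)}c\to d$ iff $a\to b\lesssim_{(\mathfrak A,\mathfrak B)}c\to d$ and $c\to d\lesssim_{(\mathfrak B,\mathfrak A)}a\to b$. For $a,b\in A$ and $c,d\in B$, the similarity-based analogical proportion $a:b\approx_{(\mathfrak A,\mathfrak B)}c:d$ holds iff $a\to b\approx_{(\mathfrak A,\mathfrak B)}c\to d$ and $b\to a\approx_{(\mathfrak A,\mathfrak B)}d\to c$. We write $\approx_{\mathfrak A}$ for $\approx_{(\mathfrak A,\mathfrak A)}$. *)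

(* Defs.v *)
From mathcomp Require Import all_boot.
Set Implicit Arguments. Unset Strict Implicit. Unset Printing Implicit Defensive.

Record language := Language { sym : Type; arity : sym -> nat }.

Inductive term (L : language) : Type :=
| Var : nat -> term L
| App : forall f : sym L, ('I_(arity f) -> term L) -> term L.

Record algebra (L : language) := Algebra {
  carrier :> Type;
  op : forall f : sym L, ('I_(arity f) -> carrier) -> carrier }.

Fixpoint eval (L : language) (A : algebra L) (sigma : nat -> A) (s : term L) : A :=
  match s with
  | Var x => sigma x
  | App f ts => @op L A f (fun i => eval sigma (ts i))
  end.

Definition gen (L : language) (A : algebra L) (a b : A) (s t : term L) : Prop :=
  exists sigma : nat -> A, eval sigma s = a /\ eval sigma t = b.

Definition cross (L : language) (A B : algebra L) (a b : A) (c d : B)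
  (s t : term L) : Prop := gen a b s t /\ gen c d s t.

Definition trivial_in (L : language) (A B : algebra L) (s t : term L) : Prop :=
  (forall e1 e2 : A, gen e1 e2 s t) /\ (forall e1 e2 : B, gen e1 e2 s t).

Definition arrow_le (L : language) (A B : algebra L) (a b : A) (c d : B) : Prop :=
  (forall s t, gen a b s t \/ gen c d s t -> trivial_in A B s t)
  \/
  ((exists s t, cross a b c d s t /\ ~ trivial_in A B s t) /\
   forall c' d' : B,
     (forall s t, cross a b c d s t -> cross a b c' d' s t) ->
     (forall s t, cross a b c' d' s t -> cross a b c d s t)).

Definition arrow_approx (L : language) (A B : algebra L) (a b : A) (c d : B) : Prop :=
  arrow_le a b c d /\ arrow_le c d a b.

Definition sim_ap (L : language) (A B : algebra L) (a b : A) (c d : B) : Prop :=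
  arrow_approx a b c d /\ arrow_approx b a d c.

(* Main.v *)
Require Import Defs.
From mathcomp Require Import all_boot.

Definition L0 : language := Language (fun _ : unit => 0).
Definition A0 : algebra L0 := @Algebra L0 bool (fun _ _ => true).

Lemma evalApp (sigma : nat -> A0) f ts : eval sigma (@App L0 f ts) = true.
Proof. by []. Qed.

Lemma not_le : ~ @arrow_le L0 A0 A0 true false false true.
Proof.
case=> [H|[[s [t [[g1 g2] Hnt]]] _]].
- have [_ T2] := H (@App L0 tt (fun _ => Var L0 0)) (Var L0 0)
    (or_introl (ex_intro _ (fun _ => false) (conj erefl erefl))).
  by have [sg [E _]] := T2 false false.
- apply: Hnt.
  case: s g1 g2 => [x|f ts]; last by move=> _ [sg [E _]].
  case: t => [y|f ts]; last by move=> [sg [_ E]].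
  move=> [s1 [E1 F1]] [s2 [E2 F2]].
  have xy : x != y by apply/eqP=> exy; subst y; simpl in *; congruence.
  have G : forall e1 e2 : A0, gen e1 e2 (Var L0 x) (Var L0 y).
    move=> e1 e2; exists (fun n => if n == x then e1 else e2) => /=.
    by rewrite eqxx eq_sym (negbTE xy).
  by split.
Qed.

Theorem theorem3 :
  exists (L : language) (A : algebra L) (a b : A), ~ sim_ap (B := A) a b b a.
Proof.
exists L0, A0, true, false.
by move=> [[H _] _]; apply: not_le.
Qed.
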